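(* Let $\alpha$ be an action of a countable group $\Gamma$ by homeomorphisms on a compact, $0$-dimensional metrizable space $X$ such that the topological full group $[\![\alpha]\!]$ has a dense, locally finite subgroup. Then the clopen type semigroup $T(\alpha)$ is unperforated and cancellative.
   Context: Clopen type semigroup: let $Y = X\times\mathbb N$, and let $\tilde\Gamma=\Gamma\times\mathfrak S$ ($\mathfrak S$ the permutation group of $\mathbb N$) act on $Y$ by $(\gamma,\sigma)(x,n)=(\alpha(\gamma)x,\sigma(n))$. A clopen $A\subseteq Y$ is bounded if $A\cap(X\times\{n\})=\emptyset$ for all large $n$. Bounded clopen $A,B$ are equidecomposable if there are clopen $A_1,\dots,A_n$ and $\tilde\gamma_i\in\tilde\Gamma$ with $A=\bigsqcup_i A_i$, $B=\bigsqcup_i\tilde\gamma_iA_i$. $T(\alpha)$ is the set of classes $[A]$, with $[A]+[B]=[A'\sqcup B']$ for disjoint representatives; $0=[\emptyset]$. $a\le b$ iff $b=a+c$ for some $c$. Unperforated: $na\le nb\Rightarrow a\le b$ for all $n\ge 1$. Cancellative: $a+b=a+c\Rightarrow b=c$. $\mathrm{Homeo}(X)$ has the topology whose basic identity neighbourhoods are the stabilizers $\{g: gA=A\ \forall A\in\mathcal A\}$ of finite clopen partitions $\mathcal A$. $[\![\alpha]\!]$ is the group of homeomorphisms $g$ for which there exist a clopen partition $X=\bigsqcup A_i$ and $\gamma_i\in\Gamma$ with $g=\alpha(\gamma_i)$ on $A_i$; density is for the induced topology. *)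

(* Defs.v *)
From HB Require Import structures.
From mathcomp Require Import all_boot all_order all_algebra.
From mathcomp Require Import all_classical all_reals topology Rstruct.

Set Implicit Arguments.
Unset Strict Implicit.
Unset Printing Implicit Defensive.

Import Order.TTheory GRing.Theory Num.Theory.
Local Open Scope classical_set_scope.
Local Open Scope ring_scope.

Definition zero_dim (X : topologicalType) :=
  forall (U : set X) (x : X), open U -> U x ->
    exists V : set X, [/\ clopen V, V x & V `<=` U].

Definition metrizable (X : topologicalType) :=
  exists d : X -> X -> Rdefinitions.R,
    [/\ (forall x y, d x y = 0 <-> x = y),
        (forall x y, d x y = d y x),
        (forall x y z, d x z <= d x y + d y z) &
        (forall U : set X, open U <->
           (forall x, U x -> exists e : Rdefinitions.R,
                0 < e /\ [set y | d x y < e] `<=` U))].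

Definition is_action (G : groupType) (X : topologicalType) (alpha : G -> X -> X) :=
  [/\ alpha 1%g = id,
      (forall g h : G, alpha (g * h)%g = alpha g \o alpha h) &
      (forall g, continuous (alpha g))].

Definition homeo (X : topologicalType) (f : X -> X) :=
  continuous f /\ exists g : X -> X, [/\ continuous g, cancel f g & cancel g f].

(* a finite clopen partition of X indexed by 'I_n (empty pieces allowed) *)
Definition clopen_partition (X : topologicalType) (n : nat) (P : 'I_n -> set X) :=
  [/\ (forall i, clopen (P i)),
      trivIset [set: 'I_n] P &
      (forall x, exists i, P i x)].

Definition full_group (G : groupType) (X : topologicalType) (alpha : G -> X -> X)
    (f : X -> X) :=
  homeo f /\
  exists (n : nat) (P : 'I_n -> set X) (gam : 'I_n -> G),
    clopen_partition P /\ (forall i x, P i x -> f x = alpha (gam i) x).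

Definition fun_subgroup (X : topologicalType) (S : set (X -> X)) :=
  [/\ S id,
      (forall f g, S f -> S g -> S (f \o g)) &
      (forall f, S f -> exists g, [/\ S g, f \o g = id & g \o f = id])].

Definition generated (X : topologicalType) (F : set (X -> X)) : set (X -> X) :=
  [set f | forall S, fun_subgroup S -> F `<=` S -> S f].

Definition locally_finite (X : topologicalType) (H : set (X -> X)) :=
  forall F, F `<=` H -> finite_set F -> finite_set (generated F).

(* H is dense in [[alpha]] for the topology induced from Homeo(X), whose
   basic neighbourhoods of g are g * Stab(P), P a finite clopen partition;
   h lies in g * Stab(P) iff h(A) = g(A) for all pieces A of P. *)
Definition dense_in_full (G : groupType) (X : topologicalType)
    (alpha : G -> X -> X) (H : set (X -> X)) :=
  forall g, full_group alpha g ->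
  forall (n : nat) (P : 'I_n -> set X), clopen_partition P ->
    exists h, H h /\ forall i, h @` P i = g @` P i.

(* Y = X * nat, with nat discrete: A is clopen in Y iff every slice is clopen *)
Definition clopenY (X : topologicalType) (A : set (X * nat)) :=
  forall n : nat, clopen [set x | A (x, n)].

Definition boundedY (X : topologicalType) (A : set (X * nat)) :=
  exists N : nat, forall x n, (N <= n)%N -> ~ A (x, n).

Definition bclopen (X : topologicalType) (A : set (X * nat)) :=
  clopenY A /\ boundedY A.

(* action of Gamma x Sym(N) on Y *)
Definition actY (G : groupType) (X : topologicalType) (alpha : G -> X -> X)
    (g : G) (s : nat -> nat) (p : X * nat) : X * nat :=
  (alpha g p.1, s p.2).

Definition equidec (G : groupType) (X : topologicalType) (alpha : G -> X -> X)
    (A B : set (X * nat)) :=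
  exists (k : nat) (P : 'I_k -> set (X * nat)) (gam : 'I_k -> G)
         (sig : 'I_k -> nat -> nat),
    [/\ (forall i, bijective (sig i) /\ clopenY (P i)),
        trivIset [set: 'I_k] P,
        A = (\bigcup_(i in [set: 'I_k]) P i),
        trivIset [set: 'I_k] (fun i => actY alpha (gam i) (sig i) @` P i) &
        B = (\bigcup_(i in [set: 'I_k]) (actY alpha (gam i) (sig i) @` P i))].

(* [S] = [A] + [C] in T(alpha): S is equidecomposable to a disjoint union
   of representatives of [A] and [C] *)
Definition sum_rep (G : groupType) (X : topologicalType) (alpha : G -> X -> X)
    (A C S : set (X * nat)) :=
  exists A' C', [/\ bclopen A' /\ bclopen C', A' `&` C' = set0,
                    equidec alpha A A', equidec alpha C C' &
                    equidec alpha S (A' `|` C')].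

(* [A] <= [B] in T(alpha): [B] = [A] + c for some c *)
Definition leT (G : groupType) (X : topologicalType) (alpha : G -> X -> X)
    (A B : set (X * nat)) :=
  exists C, bclopen C /\ sum_rep alpha A C B.

(* [M] = n [A] in T(alpha): M is equidecomposable to a disjoint union of
   n representatives of [A] *)
Definition nmul (G : groupType) (X : topologicalType) (alpha : G -> X -> X)
    (n : nat) (A M : set (X * nat)) :=
  exists P : 'I_n -> set (X * nat),
    [/\ (forall i, bclopen (P i) /\ equidec alpha (P i) A),
        trivIset [set: 'I_n] P &
        equidec alpha M (\bigcup_(i in [set: 'I_n]) P i)].

Definition unperforated (G : groupType) (X : topologicalType) (alpha : G -> X -> X) :=
  forall (n : nat) (A B M N : set (X * nat)), (0 < n)%N ->
    bclopen A -> bclopen B -> bclopen M -> bclopen N ->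
    nmul alpha n A M -> nmul alpha n B N -> leT alpha M N -> leT alpha A B.

Definition cancellative (G : groupType) (X : topologicalType) (alpha : G -> X -> X) :=
  forall A B C S : set (X * nat),
    bclopen A -> bclopen B -> bclopen C -> bclopen S ->
    sum_rep alpha A B S -> sum_rep alpha A C S -> equidec alpha B C.

(* Main.v *)
Require Import Defs.
From HB Require Import structures.
From mathcomp Require Import all_boot all_order all_algebra.
From mathcomp Require Import all_classical all_reals topology Rstruct.
Set Implicit Arguments.
Unset Strict Implicit.
Unset Printing Implicit Defensive.
Local Open Scope classical_set_scope.
Section S1.
Variables (G : groupType) (X : topologicalType) (alpha : G -> X -> X).
Hypothesis act : is_action alpha.

Definition mv (f : X -> X) (s : nat -> nat) (p : X * nat) : X * nat := (f p.1, s p.2).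

Lemma homeo_image (f : X -> X) (V : set X) : homeo f -> clopen V -> clopen (f @` V).
Proof.
move=> [fc [g [gc fK gK]]] cV.
have -> : f @` V = g @^-1` V.
  apply/seteqP; split => [x [v Vv <-]|x /= Vgx]; first by rewrite /= fK.
  by exists (g x) => //; rewrite gK.
exact: preimage_clopen.
Qed.

Lemma homeo_inj (f : X -> X) : homeo f -> injective f.
Proof. by move=> [_ [g [_ fK _]]]; exact: can_inj fK. Qed.

Lemma clopenY_mv (P : set (X * nat)) f s :
  clopenY P -> homeo f -> bijective s -> clopenY (mv f s @` P).
Proof.
move=> cP hf [si sK siK] m.
have -> : [set x | (mv f s @` P) (x, m)] = f @` [set x | P (x, si m)].
  apply/seteqP; split => [x [[y n] Pyn [<- <-]]|x [y Py <-]].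
    by exists y => //=; rewrite sK.
  by exists (y, si m) => //=; rewrite /mv /= siK.
exact: homeo_image.
Qed.

Lemma alpha_homeo g : homeo (alpha g).
Proof.
case: act => a1 aM ac; split => //; exists (alpha g^-1)%g; split => //.
  by move=> x; rewrite -[alpha _ (alpha _ x)]/((alpha _ \o alpha _) x) -aM mulVg a1.
by move=> x; rewrite -[alpha _ (alpha _ x)]/((alpha _ \o alpha _) x) -aM mulgV a1.
Qed.

Lemma alpha_full g : full_group alpha (alpha g).
Proof.
split; first exact: alpha_homeo.
exists 1%N, (fun _ => setT), (fun _ => g); split => //.
split => //; first by move=> _; exact: clopenT.
  by move=> i j _ _ _; rewrite !ord1.
by move=> x; exists ord0.
Qed.

Lemma id_full : full_group alpha id.
Proof. by case: act => a1 _ _; rewrite -a1; exact: alpha_full. Qed.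

Lemma full_homeo f : full_group alpha f -> homeo f.
Proof. by case. Qed.

Lemma equidec_move (P : set (X * nat)) f s :
  clopenY P -> full_group alpha f -> bijective s -> equidec alpha P (mv f s @` P).
Proof.
move=> cP [hf [n [Q [gam [[cQ tQ covQ] fQ]]]]] bs.
have fi := homeo_inj hf.
have bi : injective s by exact: bij_inj.
exists n, (fun i => [set p | P p /\ Q i p.1]), gam, (fun _ => s); split.
- move=> i; split => // m.
  have -> : [set x | [set p | P p /\ Q i p.1] (x, m)] = [set x | P (x, m)] `&` Q i by [].
  exact: clopenI.
- move=> i j _ _ [[x m] [[_ Qi] [_ Qj]]]; apply: tQ => //; by exists x.
- apply/seteqP; split => [[x m] Pxm|[x m] [i _ []//]].
  by case: (covQ x) => i Qi; exists i.
- move=> i j _ _ [[y m] [[[x1 n1] [_ Q1] e1] [[x2 n2] [_ Q2] e2]]].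
  apply: tQ => //; exists x1; split => //.
  move: e1 e2; rewrite /actY /= -fQ // -fQ // => -[<- <-] [e1 e2].
  by move/fi: e1 => e; rewrite -e.
- apply/seteqP; split => [_ [[x m] Pxm <-]|_ [i _ [[x m] [Pxm Qx] <-]]].
    case: (covQ x) => i Qi; exists i => //; exists (x, m) => //.
    by rewrite /actY /mv /= (fQ _ _ Qi).
  by exists (x, m) => //; rewrite /actY /mv /= (fQ _ _ Qx).
Qed.

Lemma equidec_refl (P : set (X * nat)) : clopenY P -> equidec alpha P P.
Proof.
move=> cP; have bid : bijective (@id nat) by exists id.
have := equidec_move cP id_full bid.
have -> // : mv id id @` P = P.
apply/seteqP; split => [_ [[x m] Pxm <-]//|p Pp]; by exists p => //; case: p Pp.
Qed.

Lemma equidec_set0 : equidec alpha set0 set0.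
Proof.
exists 0%N, (fun _ => set0), (fun _ => 1%g), (fun _ => id); split.
- by case.
- by case.
- by apply/seteqP; split => [//|p [[]]].
- by case.
- by apply/seteqP; split => [//|p [[]]].
Qed.

Definition sel T k1 k2 (f1 : 'I_k1 -> T) (f2 : 'I_k2 -> T) (i : 'I_(k1 + k2)) : T :=
  match fintype.split i with inl j => f1 j | inr j => f2 j end.

Lemma sel_l T k1 k2 (f1 : 'I_k1 -> T) (f2 : 'I_k2 -> T) j : sel f1 f2 (lshift k2 j) = f1 j.
Proof. by rewrite /sel (unsplitK (inl _ j)). Qed.

Lemma sel_r T k1 k2 (f1 : 'I_k1 -> T) (f2 : 'I_k2 -> T) j : sel f1 f2 (rshift k1 j) = f2 j.
Proof. by rewrite /sel (unsplitK (inr _ j)). Qed.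

Lemma ord_lr k1 k2 (i : 'I_(k1 + k2)) :
  (exists j, i = lshift k2 j) \/ (exists j, i = rshift k1 j).
Proof.
by rewrite -(splitK i); case: (fintype.split i) => j; [left|right]; exists j.
Qed.

Lemma equidec_union2 (A B C D : set (X * nat)) :
  equidec alpha A B -> equidec alpha C D -> A `&` C = set0 -> B `&` D = set0 ->
  equidec alpha (A `|` C) (B `|` D).
Proof.
move=> [k1 [P1 [g1 [s1 [h1 t1 eA t1' eB]]]]] [k2 [P2 [g2 [s2 [h2 t2 eC t2' eD]]]]] AC BD.
exists (k1 + k2)%N, (sel P1 P2), (sel g1 g2), (sel s1 s2); split.
- by move=> i; case: (ord_lr i) => -[j ->]; rewrite ?sel_l ?sel_r.
- move=> i j _ _; case: (ord_lr i) => -[i' ->]; case: (ord_lr j) => -[j' ->];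
    rewrite ?sel_l ?sel_r => -[p [Pi Pj]].
  + by congr lshift; apply: t1 => //; exists p.
  + suff : (A `&` C) p by rewrite AC.
    by rewrite eA eC; split; [exists i'|exists j'].
  + suff : (A `&` C) p by rewrite AC.
    by rewrite eA eC; split; [exists j'|exists i'].
  + by congr rshift; apply: t2 => //; exists p.
- rewrite eA eC; apply/seteqP; split => [p [[i _ Pp]|[i _ Pp]]|p [i _]].
  + by exists (lshift k2 i) => //; rewrite sel_l.
  + by exists (rshift k1 i) => //; rewrite sel_r.
  + by case: (ord_lr i) => -[j ->]; rewrite ?sel_l ?sel_r => Pp; [left|right]; exists j.
- move=> i j _ _; case: (ord_lr i) => -[i' ->]; case: (ord_lr j) => -[j' ->];
    rewrite ?sel_l ?sel_r => -[p [Pi Pj]].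
  + by congr lshift; apply: t1' => //; exists p.
  + suff : (B `&` D) p by rewrite BD.
    by rewrite eB eD; split; [exists i'|exists j'].
  + suff : (B `&` D) p by rewrite BD.
    by rewrite eB eD; split; [exists j'|exists i'].
  + by congr rshift; apply: t2' => //; exists p.
- rewrite eB eD; apply/seteqP; split => [p [[i _ Pp]|[i _ Pp]]|p [i _]].
  + by exists (lshift k2 i) => //; rewrite !sel_l.
  + by exists (rshift k1 i) => //; rewrite !sel_r.
  + by case: (ord_lr i) => -[j ->]; rewrite ?sel_l ?sel_r => Pp; [left|right]; exists j.
Qed.

Definition Ucup (n : nat) (P : nat -> set (X * nat)) : set (X * nat) :=
  [set p | exists2 i, (i < n)%N & P i p].

Lemma equidec_bigU n (P Q : nat -> set (X * nat)) :
  (forall i, (i < n)%N -> equidec alpha (P i) (Q i)) ->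
  (forall i j, (i < n)%N -> (j < n)%N -> i <> j -> P i `&` P j = set0) ->
  (forall i j, (i < n)%N -> (j < n)%N -> i <> j -> Q i `&` Q j = set0) ->
  equidec alpha (Ucup n P) (Ucup n Q).
Proof.
elim: n => [|n IH] hE hP hQ.
  have E0 R : Ucup 0 R = set0 by apply/seteqP; split => // p [].
  by rewrite !E0; exact: equidec_set0.
have ES R : Ucup n.+1 R = Ucup n R `|` R n.
  apply/seteqP; split => [p [i]|p [[i lti Rp]|Rp]].
  - by rewrite ltnS leq_eqVlt => /orP[/eqP-> Rp|lti Rp]; [right|left; exists i].
  - by exists i => //; exact: ltnW.
  - by exists n.
have dis R : (forall i j, (i < n.+1)%N -> (j < n.+1)%N -> i <> j -> R i `&` R j = set0) ->
    Ucup n R `&` R n = set0.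
  move=> hR; apply/seteqP; split => // p [[i lti Ri] Rn].
  have inn : i <> n by move=> e; move: lti; rewrite e ltnn.
  have E := hR i n (ltnW lti) (ltnSn n) inn.
  by suff : (R i `&` R n) p by rewrite E.
rewrite !ES; apply: equidec_union2.
- apply: IH => [i lti|i j lti ltj|i j lti ltj].
  + exact: hE (ltnW lti).
  + exact: hP (ltnW lti) (ltnW ltj).
  + exact: hQ (ltnW lti) (ltnW ltj).
- exact: hE.
- exact: dis.
- exact: dis.
Qed.

End S1.

Lemma card_bigcup_disj (T : finType) k (F : 'I_k -> {set T}) :
  (forall i j p, p \in F i -> p \in F j -> i = j) ->
  #|(\bigcup_(i < k) F i)%SET| = (\sum_(i < k) #|F i|)%N.
Proof.
elim: k F => [|k IH] F hd; first by rewrite !big_ord0 cards0.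
rewrite !big_ord_recr /= cardsU IH; last first.
  by move=> i j p Fi Fj; apply/val_inj; have /(congr1 val) := hd _ _ _ Fi Fj.
suff -> : ((\bigcup_(i < k) F (widen_ord (leqnSn k) i)) :&: F ord_max = finset.set0)%SET.
  by rewrite cards0 subn0.
apply/setP => p; rewrite finset.in_setI finset.in_set0; apply/negP => /andP[/bigcupP[i _ Fi] Fm].
have := hd _ _ _ Fi Fm => /(congr1 val) /= ei.
by move: (ltn_ord i); rewrite ei ltnn.
Qed.

Section S2.
Variables (X : topologicalType) (m : nat) (kk : 'I_m -> X -> X) (N0 : nat).
Hypothesis Kmul : forall i j, exists l, kk l = kk i \o kk j.
Hypothesis Kinv : forall i, exists j, kk j \o kk i = id /\ kk i \o kk j = id.
Hypothesis Kid : exists i, kk i = id.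
Hypothesis kk_inj : injective kk.

Definition mul i j := projT1 (choice (Kmul i)) j.
Lemma mulE i j : kk (mul i j) = kk i \o kk j.
Proof. exact: (projT2 (choice (Kmul i)) j). Qed.
Lemma mulE' i j y : kk (mul i j) y = kk i (kk j y).
Proof. by rewrite mulE. Qed.
Definition inv i := projT1 (choice Kinv) i.
Lemma invK i y : kk (inv i) (kk i y) = y.
Proof. by have [+ _] := projT2 (choice Kinv) i => /(congr1 (fun f => f y)). Qed.
Lemma invK' i y : kk i (kk (inv i) y) = y.
Proof. by have [_ +] := projT2 (choice Kinv) i => /(congr1 (fun f => f y)). Qed.
Lemma kk_injx i : injective (kk i).
Proof. exact: can_inj (invK i). Qed.
Definition idx := proj1_sig (cid Kid).
Lemma idxE y : kk idx y = y.
Proof. by rewrite /idx; case: (cid Kid) => i /= ->. Qed.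

Definition isrep (y : X) (i : 'I_m) := forall j : 'I_m, (j < i)%N -> kk j y <> kk i y.

Definition R (A : set (X * nat)) (y : X) : {set 'I_m * 'I_N0} :=
  [set p : 'I_m * 'I_N0 | `[< A (kk p.1 y, val p.2) /\ isrep y p.1 >]].

Definition c A y := #|R A y|.

Definition rp (y : X) (i : 'I_m) := [arg min_(j < i | kk j y == kk i y) val j].

Lemma rp_spec y i : kk (rp y i) y = kk i y /\ isrep y (rp y i).
Proof.
rewrite /rp; case: arg_minnP => [//|j /eqP ej hmin]; split => // l ltl el.
by have := hmin l; rewrite el ej eqxx => /(_ isT); rewrite leqNgt ltl.
Qed.

Lemma rp_eq y i : kk (rp y i) y = kk i y. Proof. by case: (rp_spec y i). Qed.
Lemma rp_rep y i : isrep y (rp y i). Proof. by case: (rp_spec y i). Qed.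

Lemma rep_uniq y i j : isrep y i -> isrep y j -> kk i y = kk j y -> i = j.
Proof.
move=> ri rj e; apply: val_inj => /=; case: (ltngtP i j) => // lt.
- by case: (rj _ lt).
- by case: (ri _ lt).
Qed.

Lemma inR A y p : (p \in R A y) <-> (A (kk p.1 y, val p.2) /\ isrep y p.1).
Proof. by rewrite inE; split => /asboolP. Qed.

Lemma c_U2 A B y : A `&` B = set0 -> c (A `|` B) y = (c A y + c B y)%N.
Proof.
move=> AB; rewrite /c -cardsUI.
have -> : R (A `|` B) y = R A y :|: R B y.
  apply/setP => p; rewrite finset.in_setU; apply/idP/orP.
    by move=> /inR[[Ap|Bp] rp]; [left|right]; apply/inR.
  by case => /inR[Ap rp]; apply/inR; split => //; [left|right].
suff -> : R A y :&: R B y = finset.set0 by rewrite cards0 addn0.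
apply/setP => p; rewrite finset.in_setI finset.in_set0; apply/negP => /andP[/inR[Ap _] /inR[Bp _]].
by suff : (A `&` B) (kk p.1 y, val p.2) by rewrite AB.
Qed.

Lemma c_bigU k (P : 'I_k -> set (X * nat)) y : trivIset [set: 'I_k] P ->
  c (\bigcup_(i in [set: 'I_k]) P i) y = (\sum_(i < k) c (P i) y)%N.
Proof.
move=> tP; rewrite /c -card_bigcup_disj; last first.
  by move=> i j p /inR[Pi _] /inR[Pj _]; apply: tP => //; exists (kk p.1 y, val p.2).
suff -> : R (\bigcup_(i in [set: 'I_k]) P i) y = (\bigcup_(i < k) R (P i) y)%SET by [].
apply/setP => p; apply/idP/bigcupP.
  by move=> /inR[[i _ Pi] rp]; exists i => //; apply/inR.
by case=> i _ /inR[Pi rp]; apply/inR; split => //; exists i.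
Qed.

Lemma c_sub A B y : A `<=` B -> (c A y <= c B y)%N.
Proof.
move=> AB; apply: subset_leq_card; apply/fintype.subsetP => p /inR[Ap rp].
by apply/inR; split => //; apply: AB.
Qed.

Lemma c_pos A z n : A (z, n) -> (n < N0)%N -> (0 < c A z)%N.
Proof.
move=> Azn ltn; apply/card_gt0P; exists (rp z idx, Ordinal ltn).
by apply/inR; rewrite /= rp_eq idxE; split => //; exact: rp_rep.
Qed.

Lemma c_move (P : set (X * nat)) (h : 'I_m) (s : nat -> nat) y :
  bijective s -> (forall p, P p -> (p.2 < N0)%N) ->
  (forall p, (mv (kk h) s @` P) p -> (p.2 < N0)%N) ->
  c (mv (kk h) s @` P) y = c P y.
Proof.
move=> bs bP bQ; have si : injective s := bij_inj bs.
pose phi (p : 'I_m * 'I_N0) := (rp y (mul h p.1), insubd p.2 (s p.2)).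
have phiE p : p \in R P y -> val (phi p).2 = s p.2.
  move=> /inR[Pp _]; rewrite /phi /= val_insubd.
  have lt : (s p.2 < N0)%N.
    by apply: (bQ (kk h (kk p.1 y), s p.2)); exists (kk p.1 y, val p.2).
  by rewrite lt.
rewrite /c; have <- : phi @: R P y = R (mv (kk h) s @` P) y.
  apply/setP => q; apply/imsetP/idP.
  - case=> p pR ->; have := pR => /inR[Pp _]; apply/inR; split; last exact: rp_rep.
    by rewrite phiE // /= rp_eq mulE'; exists (kk p.1 y, val p.2).
  - case: q => q1 q2 /inR /= [[[z n] Pzn e] rq]; case: e => e1 e2.
    have ltn : (n < N0)%N by exact: (bP _ Pzn).
    pose i := rp y (mul (inv h) q1).
    have ki : kk i y = z by rewrite rp_eq mulE' -e1 invK.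
    have pR : (i, Ordinal ltn) \in R P y by apply/inR; split; [rewrite ki|exact: rp_rep].
    exists (i, Ordinal ltn) => //; congr pair.
    + by apply: (rep_uniq rq (@rp_rep y (mul h i))); rewrite rp_eq mulE' ki e1.
    + by apply: val_inj => /=; move: (phiE _ pR); rewrite /phi /= => ->.
apply: card_in_imset => p q pR qR [e1 e2].
have e2' : s p.2 = s q.2 by rewrite -(phiE _ pR) -(phiE _ qR) /phi /= e2.
case: p q pR qR e1 e2 e2' => p1 p2 [q1 q2] /= /inR[_ r1] /inR[_ r2] e1 _ e2.
congr pair; last by apply: val_inj; exact: si.
apply: rep_uniq r1 r2 _; rewrite /=; apply: (@kk_injx h).
by rewrite -!mulE' -(rp_eq y (mul h p1)) e1 rp_eq.
Qed.

End S2.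

Section Clop.
Variable X : topologicalType.

Lemma clopen_all_seq (I : eqType) (s : seq I) (V : I -> set X) :
  (forall i, clopen (V i)) -> clopen [set y | forall i, i \in s -> V i y].
Proof.
move=> cV; elim: s => [|a s IH].
  have -> : [set y | forall i, i \in [::] -> V i y] = setT by apply/seteqP; split.
  exact: clopenT.
have -> : [set y | forall i, i \in a :: s -> V i y] =
    V a `&` [set y | forall i, i \in s -> V i y].
  apply/seteqP; split => [y H|y [Va H] i]; first by split => [|i iin]; apply: H;
    rewrite in_cons ?eqxx ?iin ?orbT.
  by rewrite in_cons => /orP[/eqP->//|]; exact: H.
exact: clopenI.
Qed.

Lemma clopen_all (I : finType) (V : I -> set X) :
  (forall i, clopen (V i)) -> clopen [set y | forall i, V i y].
Proof.
move=> cV; have -> : [set y | forall i, V i y] = [set y | forall i, i \in enum I -> V i y].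
  by apply/seteqP; split => y H i; [move=> _|]; apply: H; rewrite ?mem_enum.
exact: clopen_all_seq.
Qed.

Lemma clopen_ex (I : finType) (V : I -> set X) :
  (forall i, clopen (V i)) -> clopen [set y | exists i, V i y].
Proof.
move=> cV; have -> : [set y | exists i, V i y] = ~` [set y | forall i, (~` V i) y].
  apply/seteqP; split => [y [i Vi] H|y H]; first exact: H Vi.
  by apply: contrapT => nH; apply: H => i Vi; apply: nH; exists i.
apply: (@clopenC _ _ set0); apply: (@clopen_all I (fun i => ~` V i)) => i; exact: (@clopenC _ _ set0).
Qed.

Lemma clopen_iff (V : set X) (b : Prop) : clopen V -> clopen [set y | V y <-> b].
Proof.
move=> cV; case: (pselect b) => hb.
  have -> : [set y | V y <-> b] = V.
    by apply/seteqP; split => y /=; [case=> _; apply|move=> Vy; split].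
  exact: cV.
have -> : [set y | V y <-> b] = ~` V.
  by apply/seteqP; split => y /=; [case=> + _ => /[apply]|move=> nV; split].
exact: (@clopenC _ _ set0).
Qed.

Lemma clopen_imp (V : set X) (b : Prop) : (b -> clopen V) -> clopen [set y | b -> V y].
Proof.
case: (pselect b) => hb cV.
  have -> : [set y | b -> V y] = V by apply/seteqP; split => y /=; [apply|move=> ? _].
  exact: cV.
have -> : [set y | b -> V y] = setT by apply/seteqP; split => y //= _ /hb.
exact: clopenT.
Qed.

End Clop.

Definition Kgrp (X : topologicalType) m (kk : 'I_m -> X -> X) :=
  [/\ (forall i j, exists l, kk l = kk i \o kk j),
      (forall i, exists j, kk j \o kk i = id /\ kk i \o kk j = id),
      (exists i, kk i = id) & injective kk].

Section S3.
Variables (G : groupType) (X : topologicalType) (alpha : G -> X -> X).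
Hypothesis act : is_action alpha.
Variable H : set (X -> X).
Hypothesis Hdense : dense_in_full alpha H.

Lemma dens_piece (P : set (X * nat)) N0 g s :
  clopenY P -> (forall p, P p -> (p.2 < N0)%N) ->
  exists h, H h /\ mv h s @` P = actY alpha g s @` P.
Proof.
move=> cP bP.
pose FT := {ffun 'I_N0 -> bool}.
pose atom (f : FT) := [set y | forall l : 'I_N0, P (y, val l) <-> f l].
pose Q := fun j : 'I_#|FT| => atom (enum_val j).
have pQ : clopen_partition Q.
  split.
  - move=> j; apply: clopen_all => l; apply: clopen_iff; exact: cP.
  - move=> i j _ _ [y [Qi Qj]]; apply: enum_val_inj; apply/ffunP => l.
    by apply/idP/idP => [/(Qi l)/(Qj l)|/(Qj l)/(Qi l)].
  - move=> y; exists (enum_rank [ffun l : 'I_N0 => `[< P (y, val l) >]]).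
    rewrite /Q enum_rankK => l; rewrite ffunE; split => [?|/asboolP//].
    exact/asboolP.
have [h [Hh hQ]] := Hdense (alpha_full act g) pQ.
exists h; split => //.
have key f1 f2 : (forall j, f1 @` Q j `<=` f2 @` Q j) -> mv f1 s @` P `<=` mv f2 s @` P.
  move=> hf _ [[y n] Pyn <-].
  have ltn := bP _ Pyn.
  pose j := enum_rank [ffun l : 'I_N0 => `[< P (y, val l) >]].
  have Qy : Q j y.
    rewrite /Q enum_rankK => l; rewrite ffunE; split => [?|/asboolP//].
    exact/asboolP.
  have [y' Qy' e] := hf j _ (ex_intro2 _ _ y Qy erefl).
  exists (y', n); last by rewrite /mv /= e.
  by apply/(Qy' (Ordinal ltn)); apply/(Qy (Ordinal ltn)).
apply/seteqP; split; apply: key => j; rewrite hQ //.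
Qed.

Lemma equidec_c (A B : set (X * nat)) N0 :
  equidec alpha A B -> (forall p, A p -> (p.2 < N0)%N) -> (forall p, B p -> (p.2 < N0)%N) ->
  exists k (hs : 'I_k -> X -> X), (forall i, H (hs i)) /\
    forall m (kk : 'I_m -> X -> X), Kgrp kk -> (forall i, exists j, kk j = hs i) ->
      forall y, c kk N0 A y = c kk N0 B y.
Proof.
move=> [k [P [gam [sig [hb tP eA tI eB]]]]] bA bB.
have bP i p : P i p -> (p.2 < N0)%N by move=> Pp; apply: bA; rewrite eA; exists i.
have : forall i, exists h, H h /\ mv h (sig i) @` P i = actY alpha (gam i) (sig i) @` P i.
  by move=> i; exact: (dens_piece (gam i) (sig i) (hb i).2 (bP i)).
move=> /choice[hs hsP]; exists k, hs; split => [i|mm kk [Km Ki Kd Kinj] hK y].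
  by case: (hsP i).
rewrite eA eB !c_bigU //; apply: eq_bigr => i _.
case: (hK i) => j ej; case: (hsP i) => _ <-.
have bQ p : (mv (hs i) (sig i) @` P i) p -> (p.2 < N0)%N.
  by case: (hsP i) => _ -> Qp; apply: bB; rewrite eB; exists i.
rewrite -ej in bQ *; rewrite (c_move Km Ki) //; first exact: (hb i).1.
exact: bP.
Qed.

End S3.

Lemma inj_exists (T : finType) (S1 S2 : {set T}) : (#|S1| <= #|S2|)%N ->
  exists f : T -> T, [/\ {in S1 &, injective f}, (f @: S1 \subset S2)%SET &
    (#|S1| = #|S2| -> (f @: S1)%SET = S2)].
Proof.
move=> le; pose f t := nth t (enum S2) (index t (enum S1)).
have ilt t : t \in S1 -> (index t (enum S1) < size (enum S2))%N.
  move=> tS; rewrite -cardE; have h : (index t (enum S1) < #|S1|)%N.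
    by rewrite cardE index_mem mem_enum.
  exact: (leq_trans h le).
have fin t : t \in S1 -> f t \in S2.
  by move=> tS; rewrite -mem_enum /f mem_nth // ilt.
have finj : {in S1 &, injective f}.
  move=> t u tS uS; rewrite /f => e.
  have := nth_uniq t (ilt t tS) (ilt u uS) (enum_uniq S2).
  rewrite (set_nth_default u t (ilt u uS)) e eqxx => /esym/eqP ei.
  have tS' : t \in enum S1 by rewrite mem_enum.
  have uS' : u \in enum S1 by rewrite mem_enum.
  by rewrite -(nth_index t tS') ei nth_index.
have sub : (f @: S1 \subset S2)%SET by apply/fintype.subsetP => _ /imsetP[t tS ->]; exact: fin.
exists f; split => // ecard; apply/eqP; rewrite eqEcard sub /= card_in_imset //.
by rewrite ecard.
Qed.

Section PX.
Variables (X : topologicalType) (x0 : X).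
Definition Xp : Type := X.
HB.instance Definition _ := Topological.copy Xp X.
HB.instance Definition _ := isPointed.Build Xp x0.
Lemma compact_fin_cover : compact [set: X] -> forall (f : X -> set X),
  (forall x, open (f x)) -> (forall x, f x x) ->
  exists s : seq X, forall y, exists2 x, x \in s & f x y.
Proof.
move=> cX f fo fx.
have cXp : @compact Xp setT by exact: cX.
rewrite compact_cover in cXp.
have [D' _ cov] := cXp Xp setT f (fun x _ => fo x) (fun y _ => ex_intro2 _ _ y I (fx y)).
exists (finmap.enum_fset D') => y; have [x xD fy] := cov y I.
by exists x.
Qed.
End PX.

Section S4a.
Variables (G : groupType) (X : topologicalType) (alpha : G -> X -> X).
Hypothesis act : is_action alpha.
Hypothesis zd : zero_dim X.
Hypothesis Xcl : forall x : X, closed [set x].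
Variables (m : nat) (kk : 'I_m -> X -> X) (N0 : nat).
Hypothesis Kg : Kgrp kk.
Hypothesis Kfull : forall i, full_group alpha (kk i).
Variables (A B : set (X * nat)).
Hypotheses (cA : clopenY A) (cB : clopenY B).
Hypotheses (bA : forall p, A p -> (p.2 < N0)%N) (bB : forall p, B p -> (p.2 < N0)%N).

Let Km : forall i j, exists l, kk l = kk i \o kk j. Proof. by case: Kg. Qed.
Let Ki : forall i, exists j, kk j \o kk i = id /\ kk i \o kk j = id. Proof. by case: Kg. Qed.
Let Kd : exists i, kk i = id. Proof. by case: Kg. Qed.
Let Kinj : injective kk. Proof. by case: Kg. Qed.

Lemma kk_cont i : continuous (kk i).
Proof. by case: (Kfull i) => -[]. Qed.

Lemma kk_homeo i : homeo (kk i).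
Proof. by case: (Kfull i). Qed.

Lemma sepU (a b : X) : a <> b -> exists U, [/\ clopen U, U a & ~ U b].
Proof.
move=> ab; have h1 : open (~` [set b]) by rewrite openC; exact: Xcl.
have h2 : (~` [set b]) a by move=> e; exact: ab e.
have [V [cV Va Vb]] := zd h1 h2.
by exists V; split => // Vb'; exact: (Vb _ Vb').
Qed.

Definition Dset (W E : set X) := [set z | exists i, exists2 w, (W `&` E) w & z = kk i w].

Definition Piece (W : set X) (S : {set 'I_m * 'I_N0}) : set (X * nat) :=
  [set p | exists2 r, r \in S & exists2 w, W w & p = (kk r.1 w, val r.2)].

Lemma clopen_andP (V : set X) (b : Prop) : (b -> clopen V) -> clopen [set y | b /\ V y].
Proof.
case: (pselect b) => hb cV.
  have -> : [set y | b /\ V y] = V by apply/seteqP; split => y /=; [case|split].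
  exact: cV.
have -> : [set y | b /\ V y] = set0 by apply/seteqP; split => y //= [].
exact: clopen0.
Qed.

Lemma piece_clopen W S : clopen W -> clopenY (Piece W S).
Proof.
move=> cW n.
have -> : [set z | Piece W S (z, n)] =
    [set z | exists r : 'I_m * 'I_N0, (r \in S /\ val r.2 = n) /\ (kk r.1 @` W) z].
  apply/seteqP; split => [z [r rS [w Ww [-> ->]]]|z [r [[rS <-] [w Ww <-]]]].
    by exists r; split => //; exists w.
  by exists r => //; exists w.
apply: (@clopen_ex _ _ (fun r : 'I_m * 'I_N0 => [set z | (r \in S /\ val r.2 = n) /\ (kk r.1 @` W) z])) => r.
by apply: clopen_andP => _; apply: homeo_image => //; exact: kk_homeo.
Qed.


Definition swp (a b n : nat) := if n == a then b else if n == b then a else n.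

Lemma swp_inv a b n : swp a b (swp a b n) = n.
Proof.
rewrite /swp; case: (eqVneq n a) => [->|na].
  by case: (eqVneq b a) => [->|ba]; rewrite ?eqxx // eqxx.
case: (eqVneq n b) => [->|nb]; first by rewrite eqxx.
by rewrite (negbTE na) (negbTE nb).
Qed.

Lemma swp_bij a b : bijective (swp a b).
Proof. by exists (swp a b) => n; rewrite swp_inv. Qed.

Lemma swp_a a b : swp a b a = b.
Proof. by rewrite /swp eqxx. Qed.

Lemma local (x : X) : exists W : set X, [/\ clopen W, W x &
  forall E, clopen E -> (forall i y, E y -> E (kk i y)) ->
   (c kk N0 A x <= c kk N0 B x)%N ->
   exists B'', [/\ clopenY B'', B'' `<=` [set p | B p /\ Dset W E p.1],
      equidec alpha [set p | A p /\ Dset W E p.1] B'' &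
      (c kk N0 A x = c kk N0 B x -> B'' = [set p | B p /\ Dset W E p.1])]].
Proof.
have : forall p : 'I_m * 'I_m, exists U : set X,
    kk p.1 x <> kk p.2 x -> [/\ clopen U, U (kk p.1 x) & ~ U (kk p.2 x)].
  move=> p; case: (pselect (kk p.1 x = kk p.2 x)) => e.
    by exists set0.
  by have [U hU] := sepU e; exists U.
move=> /choice[U hU].
pose W0 := [set y | (forall (i : 'I_m) (n : 'I_N0),
    (A (kk i y, val n) <-> A (kk i x, val n)) /\ (B (kk i y, val n) <-> B (kk i x, val n))) /\
  (forall p : 'I_m * 'I_m, kk p.1 x <> kk p.2 x -> U p (kk p.1 y) /\ ~ U p (kk p.2 y))].
have cW0 : clopen W0.
  apply: clopenI.
  - apply: (@clopen_all _ _ (fun i => [set y | forall n : 'I_N0,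
      (A (kk i y, val n) <-> A (kk i x, val n)) /\ (B (kk i y, val n) <-> B (kk i x, val n))])) => i.
    apply: (@clopen_all _ _ (fun n : 'I_N0 => [set y |
      (A (kk i y, val n) <-> A (kk i x, val n)) /\ (B (kk i y, val n) <-> B (kk i x, val n))])) => n.
    apply: clopenI; apply: clopen_iff.
    + exact: (preimage_clopen (cA n) (@kk_cont i)).
    + exact: (preimage_clopen (cB n) (@kk_cont i)).
  - apply: (@clopen_all _ _ (fun p : 'I_m * 'I_m => [set y | kk p.1 x <> kk p.2 x ->
      U p (kk p.1 y) /\ ~ U p (kk p.2 y)])) => p.
    apply: clopen_imp => ne; have [cU _ _] := hU p ne.
    apply: clopenI; first exact: (preimage_clopen cU (@kk_cont p.1)).
    exact: (preimage_clopen (@clopenC _ _ set0 cU) (@kk_cont p.2)).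
pose W := [set y | forall i : 'I_m, kk i x = x -> W0 (kk i y)].
have cW : clopen W.
  apply: (@clopen_all _ _ (fun i => [set y | kk i x = x -> W0 (kk i y)])) => i.
  by apply: clopen_imp => _; exact: (preimage_clopen cW0 (@kk_cont i)).
have W0x : W0 x by split => [i n|p ne]; [split; split => //|by case: (hU p ne)].
have Wx : W x by move=> i ->.
have WW0 y : W y -> W0 y.
  by move=> Wy; have := Wy (idx Kd) (idxE Kd x); rewrite idxE.
have WS y s : W y -> kk s x = x -> W (kk s y).
  move=> Wy sx i ix; have := Wy (mul Km i s); rewrite !mulE' sx ix; apply.
  by [].
have sep y y' i j : W0 y -> W0 y' -> kk i y = kk j y' -> kk i x = kk j x.
  move=> W0y W0y' e; apply: contrapT => ne.
  have [h1 _] := W0y.2 (i, j) ne; have [_ h2] := W0y'.2 (i, j) ne.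
  by apply: h2; rewrite /= -e.
exists W; split => // E cE EK le.
pose W' := W `&` E.
have cW' : clopen W' by apply: clopenI.
have W'S y s : W' y -> kk s x = x -> W' (kk s y).
  by move=> [Wy Ey] sx; split; [exact: WS|exact: EK].
have cover (Z : set (X * nat)) :
    (forall y i (n : 'I_N0), W0 y -> (Z (kk i y, val n) <-> Z (kk i x, val n))) ->
    (forall p, Z p -> (p.2 < N0)%N) ->
    [set p | Z p /\ Dset W E p.1] = Piece W' (R kk N0 Z x).
  move=> cZ bZ; apply/seteqP; split.
  - move=> [z n] [Zp [l [w W'w ez]]] /=; rewrite /= in ez.
    have ltn := bZ _ Zp.
    pose r1 := rp kk x l; pose s := mul Km (inv Ki r1) l.
    have sx : kk s x = x by rewrite mulE' -(rp_eq kk x l) invK.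
    exists (r1, Ordinal ltn).
      apply/inR; split; last exact: rp_rep.
      rewrite /= rp_eq; apply/(cZ w l (Ordinal ltn) (WW0 _ W'w.1)); by rewrite /= -ez.
    exists (kk s w); first exact: W'S.
    by rewrite /= mulE' invK' ez.
  - move=> _ [r rR [w W'w ->]]; have /inR [Zr _] := rR; split.
      exact/(cZ w r.1 r.2 (WW0 _ W'w.1)).
    by exists r.1, w.
have cAx y i (n : 'I_N0) : W0 y -> (A (kk i y, val n) <-> A (kk i x, val n)).
  by move=> [h _]; case: (h i n).
have cBx y i (n : 'I_N0) : W0 y -> (B (kk i y, val n) <-> B (kk i x, val n)).
  by move=> [h _]; case: (h i n).
have pdis (r r' : 'I_m * 'I_N0) : isrep kk x r.1 -> isrep kk x r'.1 -> r <> r' ->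
    Piece W' [set r]%SET `&` Piece W' [set r']%SET = set0.
  move=> rr rr' ne; apply/seteqP; split => // p.
  move=> [[q /finset.set1P -> [w Ww ->]] [q' /finset.set1P -> [w' Ww' e]]].
  case: e => e1 e2; have ex := sep w w' r.1 r'.1 (WW0 _ Ww.1) (WW0 _ Ww'.1) e1.
  have e1' := rep_uniq rr rr' ex; apply: ne.
  by case: r r' rr rr' e1 e2 ex e1' => [r1 r2] [r1' r2'] /= _ _ _ e2 _ ->;
    congr pair; apply: val_inj.
have [f [finj fsub feq]] := inj_exists (S1 := R kk N0 A x) (S2 := R kk N0 B x) le.
have eA := cover A cAx bA; have eB := cover B cBx bB.
have isrA r : r \in R kk N0 A x -> isrep kk x r.1 by case/inR.
have isrB r : r \in R kk N0 B x -> isrep kk x r.1 by case/inR.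
exists (Piece W' (f @: R kk N0 A x)%SET); split.
- exact: piece_clopen.
- rewrite eB => _ [r rS [w Ww ->]]; exists r; first exact: (fintype.subsetP fsub).
  by exists w.
- rewrite eA.
  have [Ra0|[r0 r0R]] := set_0Vmem (R kk N0 A x).
    have P0 : Piece W' finset.set0 = set0.
      by apply/seteqP; split => // p [r]; rewrite finset.in_set0.
    by rewrite Ra0 imset0 P0; exact: equidec_set0.
  pose e := enum (R kk N0 A x).
  have nthR j : (j < size e)%N -> nth r0 e j \in R kk N0 A x.
    by move=> ltj; rewrite -mem_enum mem_nth.
  have UE g : Ucup (size e) (fun j => Piece W' [set g (nth r0 e j)]%SET) =
      Piece W' (g @: R kk N0 A x)%SET.
    apply/seteqP; split.
    + move=> p [j ltj [q /finset.set1P -> rest]]; exists (g (nth r0 e j)) => //.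
      by apply/imsetP; exists (nth r0 e j) => //; exact: nthR.
    + move=> p [q /imsetP[r rR ->] rest]; exists (index r e).
        by rewrite index_mem mem_enum.
      by exists (g r) => //; rewrite nth_index ?mem_enum ?finset.set11.
  have UA := UE (fun r => r); rewrite imset_id in UA.
  rewrite -UA -(UE f); apply: equidec_bigU => [j ltj|j j' ltj ltj' ne|j j' ltj ltj' ne].
  + set r := nth r0 e j.
    have -> : Piece W' [set f r]%SET =
        mv (kk (mul Km (f r).1 (inv Ki r.1))) (swp r.2 (f r).2) @` Piece W' [set r]%SET.
      apply/seteqP; split.
      * move=> _ [q /finset.set1P -> [w Ww ->]]; exists (kk r.1 w, val r.2).
          by exists r; [exact: finset.set11|exists w].
        by rewrite /mv /= mulE' invK swp_a.
      * move=> _ [_ [q /finset.set1P -> [w Ww ->]] <-]; exists (f r); first exact: finset.set11.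
        by exists w => //; rewrite /mv /= mulE' invK swp_a.
    apply: equidec_move => //; [exact: piece_clopen|exact: swp_bij].
  + apply: pdis; [exact: isrA (nthR _ ltj)|exact: isrA (nthR _ ltj')|].
    move=> e1; apply: ne; apply/eqP.
    by rewrite -(nth_uniq r0 ltj ltj' (enum_uniq _)) e1.
  + apply: pdis.
    * by apply: isrB; apply: (fintype.subsetP fsub); apply/imsetP; exists (nth r0 e j) => //; exact: nthR.
    * by apply: isrB; apply: (fintype.subsetP fsub); apply/imsetP; exists (nth r0 e j') => //; exact: nthR.
    move=> /(finj _ _ (nthR _ ltj) (nthR _ ltj')) e1; apply: ne; apply/eqP.
    by rewrite -(nth_uniq r0 ltj ltj' (enum_uniq _)) e1.
- by move=> ecard; rewrite (feq ecard) eB.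
Qed.


Lemma Dset_clopen W E : clopen W -> clopen E -> clopen (Dset W E).
Proof.
move=> cW cE.
have -> : Dset W E = [set z | exists i : 'I_m, (kk i @` (W `&` E)) z].
  apply/seteqP; split => z [i [w Ww e]]; exists i.
    by exists w.
  by exists w.
apply: (@clopen_ex _ _ (fun i : 'I_m => kk i @` (W `&` E))) => i.
by apply: homeo_image; [exact: kk_homeo|exact: clopenI].
Qed.

Lemma Dset_K W E i y : Dset W E y -> Dset W E (kk i y).
Proof. by move=> [l [w Ww ->]]; exists (mul Km i l), w => //; rewrite mulE'. Qed.

Lemma Dset_Kinv W E i y : Dset W E (kk i y) -> Dset W E y.
Proof. by move=> /(Dset_K (inv Ki i)); rewrite invK. Qed.

Lemma Dset_sub W E E' : E `<=` E' -> Dset W E `<=` Dset W E'.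
Proof. by move=> EE z [i [w [Ww Ew] ->]]; exists i, w => //; split => //; exact: EE. Qed.

Lemma Dset_E W E : (forall i y, E y -> E (kk i y)) -> Dset W E `<=` E.
Proof. by move=> EK z [i [w [_ Ew] ->]]; exact: EK. Qed.

Hypothesis Xc : compact [set: X].

Lemma realize : (forall y, c kk N0 A y <= c kk N0 B y)%N ->
  exists B'', [/\ clopenY B'', B'' `<=` B, equidec alpha A B'' &
    ((forall y, c kk N0 A y = c kk N0 B y) -> B'' = B)].
Proof.
move=> le.
case: (pselect (exists x : X, True)) => [[x0 _]|nX]; last first.
  have E0 (Z : set (X * nat)) : Z = set0.
    by apply/seteqP; split => // [[x n]] _; apply: nX; exists x.
  exists B; split => //; rewrite (E0 A) (E0 B); exact: equidec_set0.
have /choice[Wf hW] := local.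
have hW1 x : clopen (Wf x) by case: (hW x).
have hW2 x : Wf x x by case: (hW x).
have [sq cov] := compact_fin_cover x0 Xc (f := Wf) (fun x => (hW1 x).1) hW2.
pose L := size sq.
pose Wj j := Wf (nth x0 sq j).
pose T j := Dset (Wj j) setT.
pose Ej j := [set y | forall l, (l < j)%N -> ~ T l y].
pose Dj j := Dset (Wj j) (Ej j).
have cWj j : clopen (Wj j) by exact: hW1.
have cT j : clopen (T j) by apply: Dset_clopen => //; exact: clopenT.
have cE j : clopen (Ej j).
  have -> : Ej j = [set y | forall l : 'I_j, (~` T l) y].
    apply/seteqP; split => y H; first by move=> l; apply: H.
    by move=> l lt; exact: (H (Ordinal lt)).
  apply: (@clopen_all _ _ (fun l : 'I_j => ~` T l)) => l.
  exact: (@clopenC _ _ set0).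
have EK j i y : Ej j y -> Ej j (kk i y).
  by move=> Ey l lt Tl; apply: (Ey l lt); exact: Dset_Kinv Tl.
have DjE j : Dj j `<=` Ej j by apply: Dset_E; exact: EK.
have DjT j : Dj j `<=` T j by apply: Dset_sub.
have Ddis j l y : j <> l -> Dj j y -> Dj l y -> False.
  move=> ne Dj1 Dl1; case: (ltngtP j l) => [lt|lt|eq]; last by apply: ne.
  - by apply: (DjE _ _ Dl1 j lt); exact: DjT.
  - by apply: (DjE _ _ Dj1 l lt); exact: DjT.
have Dcov y : exists2 j, (j < L)%N & Dj j y.
  have [x xs Wxy] := cov y.
  have T0 : T (index x sq) y.
    exists (idx Kd), y; last by rewrite idxE.
    by split => //; rewrite /Wj nth_index.
  have exP : exists j, `[< T j y >] by exists (index x sq); exact/asboolP.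
  case: (ex_minnP exP) => j /asboolP Tj jmin.
  exists j.
    apply: (leq_ltn_trans (jmin _ (asboolT T0))).
    by rewrite index_mem.
  case: Tj => i [w [Ww _] ew].
  have Ey : Ej j y.
    move=> l lt Tl; have := jmin l (asboolT Tl).
    by rewrite leqNgt lt.
  exists i, w => //; split => //.
  by have := EK j (inv Ki i) y Ey; rewrite ew invK.
have : forall j, exists B'', [/\ clopenY B'', B'' `<=` [set p | B p /\ Dj j p.1],
      equidec alpha [set p | A p /\ Dj j p.1] B'' &
      (c kk N0 A (nth x0 sq j) = c kk N0 B (nth x0 sq j) -> B'' = [set p | B p /\ Dj j p.1])].
  move=> j; have [_ _ H] := hW (nth x0 sq j).
  exact: (H (Ej j) (cE j) (EK j) (le _)).
move=> /choice[Bf hB].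
have hB2 j : Bf j `<=` [set p | B p /\ Dj j p.1] by case: (hB j).
have UD (Z : set (X * nat)) : Z = Ucup L (fun j => [set p | Z p /\ Dj j p.1]).
  apply/seteqP; split => [[y n] Zp|p [j _ []//]].
  by have [j jL Dy] := Dcov y; exists j.
exists (Ucup L Bf); split.
- move=> n; have -> : [set z | Ucup L Bf (z, n)] = [set z | exists j : 'I_L, [set z | Bf j (z, n)] z].
    apply/seteqP; split => z [j]; first by move=> lt Bz; exists (Ordinal lt).
    by move=> Bz; exists j.
  by apply: (@clopen_ex _ _ (fun j : 'I_L => [set z | Bf j (z, n)])) => j; case: (hB j) => + _ _ _; apply.
- by move=> p [j _ /hB2 []].
- rewrite {1}(UD A); apply: equidec_bigU => [j _|j l _ _ ne|j l _ _ ne].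
  + by case: (hB j).
  + by apply/seteqP; split => // p [[_ D1] [_ D2]]; exact: (Ddis j l p.1 ne D1 D2).
  + apply/seteqP; split => // p [B1 B2].
    have [_ D1] := hB2 j _ B1; have [_ D2] := hB2 l _ B2.
    exact: (Ddis j l p.1 ne D1 D2).
- move=> eqc; rewrite [RHS](UD B); apply/seteqP; split => p [j lt Bp]; exists j => //.
    by case: (hB j) => _ _ _ /(_ (eqc _)) E; rewrite -E.
  by case: (hB j) => _ _ _ /(_ (eqc _)) E; rewrite E.
Qed.

End S4a.
From mathcomp Require Import lra.
Import Order.TTheory GRing.Theory Num.Theory.

Lemma metr_T1 (X : topologicalType) : metrizable X -> forall x : X, closed [set x].
Proof.
move=> [d [d0 dsym dtri dopen]] x; rewrite -openC; apply/dopen => y yx.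
have dyy : d y y = 0%R by apply/d0.
have h := dtri y x y; rewrite dyy (dsym x y) in h.
have nz : d y x <> 0%R by move=> /d0 e; apply: yx; rewrite e.
exists (d y x); split.
  have : (0 <= d y x)%R by lra.
  by rewrite le_eqVlt => /orP[/eqP e|//]; case: nz.
by move=> z /= dz zx; rewrite zx ltxx in dz.
Qed.

Section S5.
Variables (G : groupType) (X : topologicalType) (alpha : G -> X -> X).
Hypothesis act : is_action alpha.
Variable H : set (X -> X).
Hypotheses (Hfull : H `<=` full_group alpha) (Hsub : fun_subgroup H)
  (Hlf : locally_finite H) (Hdense : dense_in_full alpha H).

Lemma gen_group (F : set (X -> X)) : F `<=` H -> fun_subgroup (generated F).
Proof.
move=> FH; split.
- by move=> S [] .
- by move=> f g fS gS S sS FS; case: (sS) => _ hc _; apply: hc; [exact: fS|exact: gS].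
- move=> f fG; have [_ _ hinv] := Hsub.
  have [g [_ fg gf]] := hinv f (fG H Hsub FH).
  exists g; split => // S sS FS; have [_ _ hinvS] := sS.
  have [g' [g'S fg' g'f]] := hinvS f (fG S sS FS).
  suff -> : g = g' by [].
  have e1 x : f (g' x) = x by exact: (congr1 (fun h => h x) fg').
  have e2 x : g (f x) = x by exact: (congr1 (fun h => h x) gf).
  by apply/funext => x; rewrite -{1}(e1 x) e2.
Qed.

Lemma enum_fin (K : set (X -> X)) : finite_set K ->
  exists m (kk : 'I_m -> X -> X), injective kk /\ (forall f, K f <-> exists i, kk i = f).
Proof.
move=> /finite_seqP[s ->]; pose s' := undup s.
exists (size s'), (fun i => nth id s' i); split.
  move=> i j /eqP; rewrite nth_uniq ?undup_uniq // => /eqP; exact: val_inj.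
move=> f; split.
  move=> /= fs; have fs' : f \in s' by rewrite mem_undup.
  have lt : (index f s' < size s')%N by rewrite index_mem.
  by exists (Ordinal lt); rewrite /= nth_index.
by move=> [i <-] /=; rewrite -mem_undup mem_nth.
Qed.

Definition Kok (L : seq (X -> X)) m (kk : 'I_m -> X -> X) :=
  [/\ Kgrp kk, (forall i, full_group alpha (kk i)) & (forall f, f \in L -> exists j, kk j = f)].

Lemma collect (L : seq (X -> X)) : (forall f, f \in L -> H f) -> exists m kk, @Kok L m kk.
Proof.
move=> LH; pose F := [set` L].
have FH : F `<=` H by move=> f; exact: LH.
have gG := gen_group FH.
have fin : finite_set (generated F) by apply: Hlf => //; exact: finite_seq.
have [m [kk [kinj kE]]] := enum_fin fin.
have GH : generated F `<=` H by move=> f fG; exact: fG H Hsub FH.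
have FG : F `<=` generated F by move=> f Ff S _ FS; exact: FS.
have [gid gcomp ginv] := gG.
exists m, kk; split.
- split => //.
  + move=> i j; apply/kE; apply: gcomp; apply/kE; by eexists.
  + move=> i; have [g [gG' e1 e2]] := ginv (kk i) (proj2 (kE _) (ex_intro _ i erefl)).
    by have [j ej] := (proj1 (kE g) gG'); exists j; rewrite ej.
  + exact/kE.
- by move=> i; apply: Hfull; apply: GH; apply/kE; exists i.
- by move=> f fL; apply/kE; apply: FG.
Qed.

Lemma equidec_L (A B : set (X * nat)) N0 :
  equidec alpha A B -> (forall p, A p -> (p.2 < N0)%N) -> (forall p, B p -> (p.2 < N0)%N) ->
  exists L : seq (X -> X), (forall f, f \in L -> H f) /\
    forall m (kk : 'I_m -> X -> X), Kgrp kk -> (forall f, f \in L -> exists j, kk j = f) ->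
      forall y, c kk N0 A y = c kk N0 B y.
Proof.
move=> eAB bA bB; have [k [hs [hH hc]]] := equidec_c act Hdense eAB bA bB.
exists [seq hs i | i <- enum 'I_k]; split.
  by move=> f /mapP[i _ ->].
move=> m kk Kg hL; apply: hc => // i; apply: hL.
by apply/mapP; exists i; rewrite ?mem_enum.
Qed.

End S5.
From mathcomp Require Import zify.

Lemma bnd (X : topologicalType) (A : set (X * nat)) : boundedY A ->
  exists N, forall p, A p -> (p.2 < N)%N.
Proof.
move=> [N hN]; exists N => -[x n] Ap /=; rewrite ltnNge; apply/negP => le.
exact: hN le Ap.
Qed.

Lemma bnd_mono (X : topologicalType) (A : set (X * nat)) N N' :
  (forall p, A p -> (p.2 < N)%N) -> (N <= N')%N -> forall p, A p -> (p.2 < N')%N.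
Proof. by move=> h le p Ap; exact: leq_trans (h p Ap) le. Qed.

Section S6.
Variables (G : groupType) (X : topologicalType) (alpha : G -> X -> X).
Hypothesis act : is_action alpha.
Variable H : set (X -> X).
Hypotheses (Hfull : H `<=` full_group alpha) (Hsub : fun_subgroup H)
  (Hlf : locally_finite H) (Hdense : dense_in_full alpha H).
Hypotheses (zd : zero_dim X) (Xcl : forall x : X, closed [set x]) (Xc : compact [set: X]).

Lemma unperf : unperforated alpha.
Proof.
move=> n A B M N' n0 bcA bcB bcM bcN [P [hP tP eM]] [Q [hQ tQ eN]]
  [C [bcC [A2 [C2 [[bA2 bC2] AC eMA eCC eNAC]]]]].
have [NA bA] := bnd bcA.2; have [NB bB] := bnd bcB.2.
have [NM bM] := bnd bcM.2; have [NN bN] := bnd bcN.2.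
have [NC bC] := bnd bcC.2; have [NA2 bA2'] := bnd bA2.2; have [NC2 bC2'] := bnd bC2.2.
have /choice[NP hNP] : forall i : 'I_n, exists N, forall p, P i p -> (p.2 < N)%N.
  by move=> i; exact: bnd (hP i).1.2.
have /choice[NQ hNQ] : forall i : 'I_n, exists N, forall p, Q i p -> (p.2 < N)%N.
  by move=> i; exact: bnd (hQ i).1.2.
pose MP := (\max_(i < n) NP i)%N; pose MQ := (\max_(i < n) NQ i)%N.
pose N0 := (NA + NB + NM + NN + NC + NA2 + NC2 + MP + MQ)%N.
have bA0 := bnd_mono bA (ltac:(rewrite /N0; lia) : (NA <= N0)%N).
have bB0 := bnd_mono bB (ltac:(rewrite /N0; lia) : (NB <= N0)%N).
have bM0 := bnd_mono bM (ltac:(rewrite /N0; lia) : (NM <= N0)%N).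
have bN0 := bnd_mono bN (ltac:(rewrite /N0; lia) : (NN <= N0)%N).
have bC0 := bnd_mono bC (ltac:(rewrite /N0; lia) : (NC <= N0)%N).
have bA20 := bnd_mono bA2' (ltac:(rewrite /N0; lia) : (NA2 <= N0)%N).
have bC20 := bnd_mono bC2' (ltac:(rewrite /N0; lia) : (NC2 <= N0)%N).
have bP0 i : forall p, P i p -> (p.2 < N0)%N.
  apply: bnd_mono (hNP i) _; have hM : (MP <= N0)%N by rewrite /N0; lia.
  exact: (leq_trans (leq_bigmax i) hM).
have bQ0 i : forall p, Q i p -> (p.2 < N0)%N.
  apply: bnd_mono (hNQ i) _; have hM : (MQ <= N0)%N by rewrite /N0; lia.
  exact: (leq_trans (leq_bigmax i) hM).
have bUP p : (\bigcup_(i in [set: 'I_n]) P i) p -> (p.2 < N0)%N by case=> i _; exact: bP0.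
have bUQ p : (\bigcup_(i in [set: 'I_n]) Q i) p -> (p.2 < N0)%N by case=> i _; exact: bQ0.
have bAC p : (A2 `|` C2) p -> (p.2 < N0)%N.
  by case=> h; [apply: bA20|apply: bC20].
have [LM [LMH LMc]] := equidec_L act Hdense eM bM0 bUP.
have [LN [LNH LNc]] := equidec_L act Hdense eN bN0 bUQ.
have [L1 [L1H L1c]] := equidec_L act Hdense eMA bM0 bA20.
have [L3 [L3H L3c]] := equidec_L act Hdense eNAC bN0 bAC.
have /choice[LP hLP] : forall i : 'I_n, exists L : seq (X -> X), (forall f, f \in L -> H f) /\
    forall m (kk : 'I_m -> X -> X), Kgrp kk -> (forall f, f \in L -> exists j, kk j = f) ->
      forall y, c kk N0 (P i) y = c kk N0 A y.
  by move=> i; exact: (equidec_L act Hdense (hP i).2 (bP0 i) bA0).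
have /choice[LQ hLQ] : forall i : 'I_n, exists L : seq (X -> X), (forall f, f \in L -> H f) /\
    forall m (kk : 'I_m -> X -> X), Kgrp kk -> (forall f, f \in L -> exists j, kk j = f) ->
      forall y, c kk N0 (Q i) y = c kk N0 B y.
  by move=> i; exact: (equidec_L act Hdense (hQ i).2 (bQ0 i) bB0).
pose L := LM ++ LN ++ L1 ++ L3 ++ flatten [seq LP i | i <- enum 'I_n] ++
  flatten [seq LQ i | i <- enum 'I_n].
have LH f : f \in L -> H f.
  rewrite !mem_cat => /or4P[/LMH//|/LNH//|/L1H//|/orP[/L3H//|/orP[]]].
  + by move=> /flatten_mapP[i _ fi]; case: (hLP i) => + _; apply.
  + by move=> /flatten_mapP[i _ fi]; case: (hLQ i) => + _; apply.
have [m [kk [Kg Kf KL]]] := collect Hfull Hsub Hlf LH.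
have cM y : c kk N0 M y = (n * c kk N0 A y)%N.
  rewrite (LMc m kk Kg) ?c_bigU //; last by move=> f fL; apply: KL; rewrite !mem_cat fL.
  rewrite (eq_bigr (fun _ => c kk N0 A y)) ?sum_nat_const ?card_ord // => i _.
  case: (hLP i) => _ -> // f fL; apply: KL.
  have fF : f \in flatten [seq LP i | i <- enum 'I_n] by apply/flatten_mapP; exists i; rewrite ?mem_enum.
  by rewrite !mem_cat fF !orbT.
have cN y : c kk N0 N' y = (n * c kk N0 B y)%N.
  rewrite (LNc m kk Kg) ?c_bigU //; last by move=> f fL; apply: KL; rewrite !mem_cat fL orbT.
  rewrite (eq_bigr (fun _ => c kk N0 B y)) ?sum_nat_const ?card_ord // => i _.
  case: (hLQ i) => _ -> // f fL; apply: KL.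
  have fF : f \in flatten [seq LQ i | i <- enum 'I_n] by apply/flatten_mapP; exists i; rewrite ?mem_enum.
  by rewrite !mem_cat fF !orbT.
have cle y : (c kk N0 M y <= c kk N0 N' y)%N.
  rewrite (L3c m kk Kg); last by move=> f fL; apply: KL; rewrite !mem_cat fL !orbT.
  rewrite c_U2 // (L1c m kk Kg) ?leq_addr // => f fL; apply: KL.
  by rewrite !mem_cat fL !orbT.
have le y : (c kk N0 A y <= c kk N0 B y)%N by rewrite -(leq_pmul2l n0) -cM -cN.
have [B'' [cB'' sB'' eAB'' _]] := realize zd Xcl Kg Kf bcA.1 bcB.1 bA0 bB0 Xc le.
pose C' := [set p | B p /\ ~ B'' p].
have cC' : clopenY C'.
  move=> k; have -> : [set x | C' (x, k)] = [set x | B (x, k)] `&` ~` [set x | B'' (x, k)] by [].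
  by apply: clopenI; [exact: bcB.1|exact: (@clopenC _ _ set0)].
have bdB (Z : set (X * nat)) : Z `<=` B -> boundedY Z.
  by move=> ZB; case: bcB.2 => NB' hB; exists NB' => x k le' /ZB; exact: hB.
exists C'; split; first by split => //; apply: bdB => p [].
exists B'', C'; split.
- by split; split => //; apply: bdB => // p [].
- by apply/seteqP; split => // p [? []].
- exact: eAB''.
- exact: equidec_refl.
- have -> : B'' `|` C' = B.
    apply/seteqP; split => [p [/sB''//|[]//]|p Bp].
    by case: (pselect (B'' p)) => h; [left|right].
  exact: equidec_refl bcB.1.
Qed.


Lemma canc : cancellative alpha.
Proof.
move=> A B C S bcA bcB bcC bcS [A1 [B1 [[bA1 bB1] d1 eA1 eB1 eS1]]]
  [A2 [C2 [[bA2 bC2] d2 eA2 eC2 eS2]]].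
have [NA bA] := bnd bcA.2; have [NB bB] := bnd bcB.2.
have [NC bC] := bnd bcC.2; have [NS bS] := bnd bcS.2.
have [NA1 bA1'] := bnd bA1.2; have [NB1 bB1'] := bnd bB1.2.
have [NA2 bA2'] := bnd bA2.2; have [NC2 bC2'] := bnd bC2.2.
pose N0 := (NA + NB + NC + NS + NA1 + NB1 + NA2 + NC2)%N.
have bA0 := bnd_mono bA (ltac:(rewrite /N0; lia) : (NA <= N0)%N).
have bB0 := bnd_mono bB (ltac:(rewrite /N0; lia) : (NB <= N0)%N).
have bC0 := bnd_mono bC (ltac:(rewrite /N0; lia) : (NC <= N0)%N).
have bS0 := bnd_mono bS (ltac:(rewrite /N0; lia) : (NS <= N0)%N).
have bA10 := bnd_mono bA1' (ltac:(rewrite /N0; lia) : (NA1 <= N0)%N).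
have bB10 := bnd_mono bB1' (ltac:(rewrite /N0; lia) : (NB1 <= N0)%N).
have bA20 := bnd_mono bA2' (ltac:(rewrite /N0; lia) : (NA2 <= N0)%N).
have bC20 := bnd_mono bC2' (ltac:(rewrite /N0; lia) : (NC2 <= N0)%N).
have bU1 p : (A1 `|` B1) p -> (p.2 < N0)%N by case=> h; [apply: bA10|apply: bB10].
have bU2 p : (A2 `|` C2) p -> (p.2 < N0)%N by case=> h; [apply: bA20|apply: bC20].
have [LA1 [LA1H LA1c]] := equidec_L act Hdense eA1 bA0 bA10.
have [LB1 [LB1H LB1c]] := equidec_L act Hdense eB1 bB0 bB10.
have [LS1 [LS1H LS1c]] := equidec_L act Hdense eS1 bS0 bU1.
have [LA2 [LA2H LA2c]] := equidec_L act Hdense eA2 bA0 bA20.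
have [LC2 [LC2H LC2c]] := equidec_L act Hdense eC2 bC0 bC20.
have [LS2 [LS2H LS2c]] := equidec_L act Hdense eS2 bS0 bU2.
pose L := LA1 ++ LB1 ++ LS1 ++ LA2 ++ LC2 ++ LS2.
have LH f : f \in L -> H f.
  rewrite !mem_cat => /or4P[/LA1H//|/LB1H//|/LS1H//|/orP[/LA2H//|/orP[/LC2H//|/LS2H//]]].
have [m [kk [Kg Kf KL]]] := collect Hfull Hsub Hlf LH.
have hBC y : c kk N0 B y = c kk N0 C y.
  have e1 : c kk N0 S y = (c kk N0 A y + c kk N0 B y)%N.
    rewrite (LS1c m kk Kg) ?c_U2 // ?(LA1c m kk Kg) ?(LB1c m kk Kg) // => f fL; apply: KL;
      by rewrite !mem_cat fL ?orbT.
  have e2 : c kk N0 S y = (c kk N0 A y + c kk N0 C y)%N.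
    rewrite (LS2c m kk Kg) ?c_U2 // ?(LA2c m kk Kg) ?(LC2c m kk Kg) // => f fL; apply: KL;
      by rewrite !mem_cat fL ?orbT.
  by apply/eqP; rewrite -(eqn_add2l (c kk N0 A y)) -e1 -e2.
have le y : (c kk N0 B y <= c kk N0 C y)%N by rewrite hBC.
have [B'' [_ _ eBB'' eq]] := realize zd Xcl Kg Kf bcB.1 bcC.1 bB0 bC0 Xc le.
by rewrite -(eq hBC).
Qed.

End S6.

Theorem lemmal (G : groupType) (X : topologicalType) (alpha : G -> X -> X) :
  countable [set: G] ->
  is_action alpha ->
  compact [set: X] -> zero_dim X -> metrizable X ->
  (exists H : set (X -> X),
      [/\ H `<=` full_group alpha, fun_subgroup H,
          locally_finite H & dense_in_full alpha H]) ->
  unperforated alpha /\ cancellative alpha.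
Proof.
move=> _ act Xc zd met [H [Hfull Hsub Hlf Hdense]].
have Xcl := metr_T1 met.
split; [exact: (unperf act Hfull Hsub Hlf Hdense zd Xcl Xc)|exact: (canc act Hfull Hsub Hlf Hdense zd Xcl Xc)].
Qed.
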